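(* Let $N\ge1$, $f:\mathbb{N}^N\to\mathbb{N}$, $p$ a prime, and $k=\sum_{j=0}^r k_jp^j$ with $0\le k_j<p$. Let $\boldsymbol{\ell}\in\mathbb{N}^N$. Then $$\binom{k}{\boldsymbol{\ell}}_f\equiv\sum_{(\mathbf{m}_0,\dots,\mathbf{m}_r)}\prod_{i=0}^r\binom{k_i}{\mathbf{m}_i}_f\pmod p,$$ where the sum is over all $(\mathbf{m}_0,\dots,\mathbf{m}_r)\in(\mathbb{N}^N)^{r+1}$ with $\mathbf{m}_0+\mathbf{m}_1p+\cdots+\mathbf{m}_rp^r=\boldsymbol{\ell}$.
   Context: $\mathbb{N}=\{0,1,2,\dots\}$. For $k\ge0$ and $\mathbf{x}\in\mathbb{N}^N$, $\binom{k}{\mathbf{x}}_f=\sum_{\mathbf{m}_1+\cdots+\mathbf{m}_k=\mathbf{x}} f(\mathbf{m}_1)\cdots f(\mathbf{m}_k)$ over tuples of vectors in $\mathbb{N}^N$. *)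

(* Defs.v *)
From mathcomp Require Import all_boot.
Set Implicit Arguments. Unset Strict Implicit. Unset Printing Implicit Defensive.

Definition vecN (N : nat) := {ffun 'I_N -> nat}.

(* Largest coordinate of x: every summand of a decomposition of x is bounded by it. *)
Definition vbound (N : nat) (x : vecN N) : nat := \max_(j < N) x j.

Definition bvec (N b : nat) := {ffun 'I_N -> 'I_b.+1}.
Definition bvec_val (N b : nat) (m : bvec N b) : vecN N := [ffun j => (m j : nat)].

(* binom_f k x = sum over (m_1,...,m_k) in (N^N)^k with m_1+...+m_k = x of
   f(m_1)...f(m_k).  Summands m_i of such a tuple satisfy m_i <= x
   coordinatewise, so restricting coordinates to [0, vbound x] loses nothing. *)
Definition binomf (N : nat) (f : vecN N -> nat) (k : nat) (x : vecN N) : nat :=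
  \sum_(t : {ffun 'I_k -> bvec N (vbound x)}
          | [forall j : 'I_N, \sum_(i < k) (t i j : nat) == x j])
     \prod_(i < k) f (bvec_val (t i)).

Definition lucas_rhs (N : nat) (f : vecN N -> nat) (p r : nat) (kd : nat -> nat)
  (l : vecN N) : nat :=
  \sum_(t : {ffun 'I_r.+1 -> bvec N (vbound l)}
          | [forall j : 'I_N, \sum_(i < r.+1) (t i j : nat) * p ^ i == l j])
     \prod_(i < r.+1) binomf f (kd i) (bvec_val (t i)).

(* Main.v *)
Require Import Defs.
From mathcomp Require Import all_boot all_algebra.
From mathcomp Require Import mpoly.
Set Implicit Arguments. Unset Strict Implicit. Unset Printing Implicit Defensive.
Import GRing.Theory.
Local Open Scope ring_scope.

Section S.
Variables (N p : nat).
Hypothesis pr : prime p.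
Local Notation F := 'F_p.
Local Notation R := {mpoly F[N]}.

Definition mono (x : vecN N) : 'X_{1..N} := [multinom x j | j < N].

Lemma coef_prod n b (c : 'I_n -> bvec N b -> F) (e : 'I_n -> bvec N b -> 'X_{1..N}) y :
 (\prod_(i < n) \sum_(m : bvec N b) c i m *: ('X_[e i m] : R))@_y =
 \sum_(t : {ffun 'I_n -> bvec N b} | (\sum_(i < n) e i (t i))%MM == y) \prod_(i < n) c i (t i).
Proof.
rewrite bigA_distr_bigA /= raddf_sum [RHS]big_mkcond /=; apply: eq_bigr => t _.
have := @scaler_prod F R _ (index_enum 'I_n) xpredT (fun i => c i (t i)) (fun i => ('X_[e i (t i)] : R)) => ->.
rewrite -(big_morph (fun m => 'X_[m] : R) (@mpolyXD _ _) (@mpolyX0 _ _)) mcoeffZ mcoeffX.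
by case: eqP => _; rewrite ?mulr1 ?mulr0.
Qed.

Definition Gg b (g : vecN N -> nat) : R :=
  \sum_(m : bvec N b) (g (bvec_val m))%:R *: 'X_[mono (bvec_val m)].

Lemma binomf_coef f k x : (binomf f k x)%:R = ((Gg (vbound x) f) ^+ k)@_(mono x) :> F.
Proof.
have -> : (Gg (vbound x) f) ^+ k = \prod_(i < k) Gg (vbound x) f by rewrite prodr_const card_ord.
rewrite coef_prod /binomf natr_sum.
apply: eq_big => [t|t _]; last by rewrite natr_prod.
apply/forallP/eqP => [H|H j].
  apply/mnmP => j; rewrite mnm_sumE mnmE -(eqP (H j)).
  by apply: eq_bigr => i _; rewrite mnmE ffunE.
have := congr1 (fun m : 'X_{1..N} => m j) H; rewrite /= mnm_sumE mnmE => <-.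
by apply/eqP; apply: eq_bigr => i _; rewrite mnmE ffunE.
Qed.

Definition agree b (P Q : R) := forall y : 'X_{1..N}, (forall j, y j <= b)%N -> P@_y = Q@_y.

Lemma agree_mul b P P' Q Q' : agree b P P' -> agree b Q Q' -> agree b (P * Q) (P' * Q').
Proof.
move=> HP HQ y Hy; rewrite !mcoeffM; apply: eq_bigr => k /eqP E.
have H1 j : (k.1 j + k.2 j <= b)%N by rewrite -mnmDE -E Hy.
rewrite HP ?HQ // => j; have := H1 j; [exact: leq_trans (leq_addl _ _) | exact: leq_trans (leq_addr _ _)].
Qed.

Lemma agree_expr b P Q n : agree b P Q -> agree b (P ^+ n) (Q ^+ n).
Proof.
move=> H; elim: n => [|n IH]; first by move=> y _; rewrite !expr0.
by rewrite !exprS; apply: agree_mul.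
Qed.

Lemma agree_prod b n (P Q : 'I_n -> R) : (forall i, agree b (P i) (Q i)) ->
  agree b (\prod_(i < n) P i) (\prod_(i < n) Q i).
Proof.
move=> H; elim/big_ind2: _ => //; last by move=> *; apply: agree_mul.
Qed.

Lemma Gg_coef b (g : vecN N -> nat) (x : vecN N) : (forall j, x j <= b)%N -> (Gg b g)@_(mono x) = (g x)%:R.
Proof.
move=> Hx; pose m0 : bvec N b := [ffun j => inord (x j)].
have vm0 : bvec_val m0 = x by apply/ffunP => j; rewrite !ffunE inordK // ltnS.
rewrite raddf_sum (bigD1 m0) //= big1 => [|m Hm].
  by rewrite mcoeffZ mcoeffX vm0 eqxx mulr1 addr0.
rewrite mcoeffZ mcoeffX; case: eqP => [E|]; last by rewrite mulr0.
case/eqP: Hm; apply/ffunP => j; apply: val_inj; rewrite /= !ffunE inordK ?ltnS //.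
by have := congr1 (fun m : 'X_{1..N} => m j) E; rewrite /= !mnmE ffunE.
Qed.

Lemma mono_vec (y : 'X_{1..N}) : y = mono [ffun j => y j].
Proof. by apply/mnmP => j; rewrite mnmE ffunE. Qed.

Lemma vbound_ge (x : vecN N) j : (x j <= vbound x)%N.
Proof. exact: (leq_bigmax_cond (F := fun j => x j)). Qed.

Lemma Gg_agree g b c : (c <= b)%N -> agree c (Gg b g) (Gg c g).
Proof.
move=> cb y Hy; rewrite (mono_vec y) !Gg_coef // => j; rewrite ffunE //.
exact: leq_trans (Hy j) cb.
Qed.

Lemma Q_agree f b k : agree b ((Gg b f) ^+ k) (Gg b (binomf f k)).
Proof.
move=> y Hy; rewrite (mono_vec y) Gg_coef; last by move=> j; rewrite ffunE.
set x := [ffun j => y j].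
have Hc : (vbound x <= b)%N by apply/bigmax_leqP => j _; rewrite ffunE.
rewrite binomf_coef; apply: agree_expr; first exact: Gg_agree.
by move=> j; rewrite mnmE vbound_ge.
Qed.


Lemma charR : p \in [pchar R].
Proof. exact: (rmorph_pchar (mpolyC N (R:=F)) (pchar_Fp pr)). Qed.

Lemma pnat_q i : [pchar R].-nat (p ^ i)%N.
Proof. by rewrite (eq_pnat _ (pcharf_eq charR)) pnatX pnat_id. Qed.

Lemma fermat (c : F) i : c ^+ (p ^ i) = c.
Proof.
have cp : c ^+ p = c.
  have -> : c = (c : nat)%:R by rewrite natr_Zp.
  by rewrite -(pFrobenius_autE (pchar_Fp pr)) rmorph_nat.
elim: i => [|i IH]; first by rewrite expr1.
by rewrite expnSr exprM IH cp.
Qed.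

Lemma frob_Gg b g i : (Gg b g) ^+ (p ^ i) =
  \sum_(m : bvec N b) (g (bvec_val m))%:R *: 'X_[(mono (bvec_val m) *+ p ^ i)%MM].
Proof.
have h0 : (0 : R) ^+ (p ^ i) = 0 by rewrite expr0n expn_eq0 eqn0Ngt prime_gt0.
rewrite /Gg (big_morph (fun x : R => x ^+ (p ^ i)) (fun x y => exprDn_pchar x y (pnat_q i)) h0).
by apply: eq_bigr => m _; rewrite exprZn fermat mpolyXn.
Qed.

End S.

Lemma main (N : nat) (f : vecN N -> nat) (p r : nat) (kd : nat -> nat)
  (l : vecN N) : prime p ->
  ((binomf f (\sum_(j < r.+1) kd j * p ^ j) l)%:R : 'F_p) = (lucas_rhs f p r kd l)%:R.
Proof.
move=> pr; rewrite (binomf_coef p) expr_sum.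
set b := vbound l.
under eq_bigr do rewrite exprM.
transitivity ((\prod_(j < r.+1) (Gg p b (binomf f (kd j))) ^+ (p ^ j))@_(mono l)).
  apply: agree_prod => [j|j]; last by rewrite mnmE; apply: vbound_ge.
  by apply: agree_expr; apply: Q_agree.
under eq_bigr do rewrite (frob_Gg pr).
rewrite (coef_prod (fun j m => (binomf f (kd j) (bvec_val m))%:R)
   (fun j m => (mono (bvec_val m) *+ p ^ j)%MM)).
rewrite /lucas_rhs natr_sum.
apply: eq_big => [t|t _]; last by rewrite natr_prod.
apply/eqP/forallP => [H j|H].
  have := congr1 (fun m : 'X_{1..N} => m j) H; rewrite /= mnm_sumE mnmE => <-.
  by apply/eqP; apply: eq_bigr => i _; rewrite mulmnE mnmE ffunE.
apply/mnmP => j; rewrite mnm_sumE mnmE -(eqP (H j)).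
by apply: eq_bigr => i _; rewrite mulmnE mnmE ffunE.
Qed.

Local Close Scope ring_scope.

Theorem theorem13 (N : nat) (f : vecN N -> nat) (p r : nat) (kd : nat -> nat)
  (l : vecN N) :
  1 <= N -> prime p -> (forall j, j <= r -> kd j < p) ->
  binomf f (\sum_(j < r.+1) kd j * p ^ j) l = lucas_rhs f p r kd l %[mod p].
Proof.
move=> _ pr _; have := congr1 (@nat_of_ord _) (main f r kd l pr).
by rewrite !val_Fp_nat.
Qed.
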